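(* Let $n\ge 2$ and $d\ge 1$ be integers and let $\mathbf{B}=(B_1,\dots,B_d)\in M_n(\mathbb{C})^d$ be a bistochastic tuple. Let $p\geq q\geq 1$. Then \begin{enumerate} \item $h_{S_p}(\mathbf{B})\leq d^{\frac{p-q}{2}}\, h_{S_q}(\mathbf{B})$, and \item $h_{S_p}(\mathbf{B})\geq \big[h_{S_q}(\mathbf{B})\big]^{p/q}$. \end{enumerate} In particular, for every $p,q\in[1,\infty)$ the notions $h_{S_p}$ and $h_{S_q}$ are equivalent: for every $d$ and every sequence $(\mathbf{B}_m)_m$ of bistochastic $d$-tuples (with $\mathbf{B}_m\in M_{n_m}(\mathbb{C})^d$), one has $\inf_m h_{S_p}(\mathbf{B}_m)>0$ if and only if $\inf_m h_{S_q}(\mathbf{B}_m)>0$.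
   Context: A tuple $\mathbf{B}=(B_1,\dots,B_d)\in M_n(\mathbb{C})^d$ is called bistochastic if $\sum_{i=1}^d B_i^*B_i=\sum_{i=1}^d B_iB_i^*=d\cdot \mathrm{Id}$. For a subspace $V$ of $\mathbb{C}^n$ let $P_V$ denote the orthogonal projector onto $V$, and write $B_i|_{V^\perp,V}=P_V B_i(\mathrm{Id}-P_V)$. For $p\in[1,\infty)$, $\|X\|_{S_p}$ denotes the Schatten-$p$ norm of a matrix $X$ (the $\ell_p$ norm of its singular values). The $S_p$ edge expansion of a bistochastic tuple is $$h_{S_p}(\mathbf{B})=\min_{\substack{V \text{ nonzero subspace of } \mathbb{C}^n,\ \dim V\leq n/2}} \frac{\sum_{i=1}^{d}\|B_i|_{V^\perp,V}\|_{S_p}^p}{d\,\dim V}.$$ *)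

(* Defs.v *)
From mathcomp Require Import all_boot all_order all_algebra.
From mathcomp Require Import complex.
From mathcomp Require Import classical_sets reals exp.
Set Implicit Arguments. Unset Strict Implicit. Unset Printing Implicit Defensive.
Import Order.TTheory GRing.Theory Num.Theory.
Local Open Scope ring_scope.
Local Open Scope sesquilinear_scope.

Section SchattenDefs.
Variable R : realType.
Local Notation C := R[i].

Definition adj {m n : nat} (X : 'M[C]_(m, n)) : 'M[C]_(n, m) := X ^t*.

(* Singular values of a square matrix X: square roots of the eigenvalues
   (with multiplicity) of the positive semidefinite Hermitian matrix X^* X,
   obtained from its spectral (unitary) diagonalization. *)
Definition sing_vals {n : nat} (X : 'M[C]_n) : 'rV[R]_n :=
  \row_i Num.sqrt (complex.Re (spectral_diag (adj X *m X) 0 i)).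

Definition schatten (p : R) {n : nat} (X : 'M[C]_n) : R :=
  (\sum_i (sing_vals X 0 i) `^ p) `^ p^-1.

(* Orthogonal projector P_V (acting on column vectors) onto the subspace V of
   C^n spanned by the rows of V (read as vectors of C^n). proj_ortho V is the
   orthogonal projector acting on row vectors; its transpose acts on columns. *)
Definition projV {n : nat} (V : 'M[C]_n) : 'M[C]_n := (proj_ortho V)^T.

Definition restr {n : nat} (V : 'M[C]_n) (B : 'M[C]_n) : 'M[C]_n :=
  projV V *m B *m (1%:M - projV V).

Definition bistochastic {n d : nat} (B : 'I_d -> 'M[C]_n) : Prop :=
  \sum_i adj (B i) *m B i = (d%:R : C)%:M /\
  \sum_i B i *m adj (B i) = (d%:R : C)%:M.

(* S_p edge expansion: the minimum (written as infimum; the minimum is attained)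
   over nonzero subspaces V with dim V <= n/2. dim V = \rank V. *)
Definition hSp (p : R) {n d : nat} (B : 'I_d -> 'M[C]_n) : R :=
  inf [set x : R | exists V : 'M[C]_n,
        [/\ (0 < \rank V)%N, (2 * \rank V <= n)%N &
            x = (\sum_i (schatten p (restr V (B i))) `^ p)
                / (d%:R * (\rank V)%:R)]].

End SchattenDefs.

(* Main.v *)
Require Import Defs.
From mathcomp Require Import all_boot all_order all_algebra.
From mathcomp Require Import complex.
From mathcomp Require Import classical_sets reals exp.
Import Order.TTheory GRing.Theory Num.Theory.
Local Open Scope ring_scope.
Local Open Scope classical_set_scope.

Module Helpers.
Set Implicit Arguments. Unset Strict Implicit. Unset Printing Implicit Defensive.
Local Open Scope ring_scope.
Local Open Scope sesquilinear_scope.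
Local Close Scope classical_set_scope.

Section Mat.
Variable C : numClosedFieldType.

Definition nrm {n} (v : 'cV[C]_n) : C := (v ^t* *m v) 0 0.

Lemma nrmE n (v : 'cV[C]_n) : nrm v = \sum_k (v k 0)^* * v k 0.
Proof. by rewrite /nrm !mxE; apply: eq_bigr => k _; rewrite !mxE. Qed.

Lemma nrm_ge0 n (v : 'cV[C]_n) : 0 <= nrm v.
Proof. by rewrite nrmE sumr_ge0 // => k _; rewrite mulrC mul_conjC_ge0. Qed.

Lemma trmxC_mul m n p (A : 'M[C]_(m, n)) (B : 'M[C]_(n, p)) :
  (A *m B) ^t* = B ^t* *m A ^t*.
Proof. by rewrite trmx_mul map_mxM. Qed.

Lemma trmxC1 n : (1%:M : 'M[C]_n) ^t* = 1%:M.
Proof. by rewrite trmx1 map_mx1. Qed.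

Lemma trmxCB n (A B : 'M[C]_n) : (A - B) ^t* = A ^t* - B ^t*.
Proof. by rewrite linearB /= map_mxB. Qed.

Lemma nrmM n (M : 'M[C]_n) (v : 'cV[C]_n) :
  nrm (M *m v) = (v ^t* *m (M ^t* *m M) *m v) 0 0.
Proof. by rewrite /nrm trmxC_mul !mulmxA. Qed.

Lemma nrm_proj n (P : 'M[C]_n) (v : 'cV[C]_n) :
  P ^t* = P -> P *m P = P -> nrm (P *m v) <= nrm v.
Proof.
move=> PH PP.
have E1 : nrm (P *m v) = (v ^t* *m P *m v) 0 0 by rewrite nrmM PH PP.
have E2 : nrm ((1%:M - P) *m v) = (v ^t* *m (1%:M - P) *m v) 0 0.
  by rewrite nrmM trmxCB trmxC1 PH mulmxBl mul1mx (mulmxBr P) mulmx1 PP subrr subr0.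
rewrite -subr_ge0.
have -> : nrm v - nrm (P *m v) = nrm ((1%:M - P) *m v).
  have sub00 : forall A B : 'M[C]_1, (A - B) 0 0 = A 0 0 - B 0 0.
    by move=> A B; rewrite !mxE.
  by rewrite E2 E1 /nrm mulmxBr mulmx1 mulmxBl sub00.
exact: nrm_ge0.
Qed.


Lemma proj_ortho_herm p n (V : 'M[C]_(p, n)) : (proj_ortho V) ^t* = proj_ortho V.
Proof.
set P := proj_ortho V.
have h1 : (1%:M - P) *m V ^t* = 0.
  by have := proj_ortho_compl_sub V (1%:M : 'M[C]_n); rewrite mul1mx => /orthomx1P.
have [D hD] : exists D, P = D *m V.
  by have /submxP [D hD] := proj_ortho_sub V (1%:M : 'M[C]_n); exists D; rewrite -hD mul1mx.
have h2 : (1%:M - P) *m P ^t* = 0 by rewrite {2}hD trmxC_mul mulmxA h1 mul0mx.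
have h3 : P ^t* = P *m P ^t*.
  by apply/eqP; rewrite -subr_eq0 -{1}[P ^t*]mul1mx -mulmxBl h2.
have h4 : P = P *m P ^t*.
  by transitivity ((P ^t*) ^t*); [rewrite trmxCK | rewrite {1}h3 trmxC_mul trmxCK].
by rewrite h3 -h4.
Qed.

Lemma proj_ortho_idem p n (V : 'M[C]_(p, n)) : proj_ortho V *m proj_ortho V = proj_ortho V.
Proof. exact: proj_ortho_proj. Qed.

Lemma nrm_col m n (Y : 'M[C]_(m, n)) j : nrm (col j Y) = (Y ^t* *m Y) j j.
Proof. by rewrite /nrm !mxE; apply: eq_bigr => k _; rewrite !mxE. Qed.

Lemma spectral_gram n (X : 'M[C]_n) :
  diag_mx (spectral_diag (X ^t* *m X)) =
  (X *m (spectralmx (X ^t* *m X)) ^t*) ^t* *m (X *m (spectralmx (X ^t* *m X)) ^t*).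
Proof.
set A := X ^t* *m X; set U := spectralmx A.
have AH : A ^t* = A by rewrite /A trmxC_mul trmxCK.
have An : A \is normalmx by apply/normalmxP; rewrite AH.
have /orthomx_spectralP E := An.
have Uu : U \is unitarymx := spectral_unitarymx A.
have UU : U *m U ^t* = 1%:M by apply/unitarymxP.
rewrite trmxC_mul trmxCK !mulmxA -[U *m X ^t* *m X]mulmxA -/A.
rewrite [in RHS]E invmx_unitary // -/U !mulmxA UU mul1mx -mulmxA UU mulmx1.
by [].
Qed.


Lemma nrm_sum n d (Bs : 'I_d -> 'M[C]_n) (w : 'cV[C]_n) :
  \sum_i (Bs i) ^t* *m Bs i = (d%:R : C)%:M ->
  \sum_i nrm (Bs i *m w) = d%:R * nrm w.
Proof.
move=> hB.
have -> : \sum_i nrm (Bs i *m w) = (w ^t* *m (\sum_i (Bs i) ^t* *m Bs i) *m w) 0 0.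
  rewrite mulmx_sumr mulmx_suml summxE; apply: eq_bigr => i _.
  by rewrite nrmM.
by rewrite hB mul_mx_scalar -scalemxAl mxE.
Qed.

Lemma sv_bound n d (Bs : 'I_d -> 'M[C]_n) (P1 P2 : 'M[C]_n) i j :
  P1 ^t* = P1 -> P1 *m P1 = P1 -> P2 ^t* = P2 -> P2 *m P2 = P2 ->
  \sum_i (Bs i) ^t* *m Bs i = (d%:R : C)%:M ->
  spectral_diag ((P1 *m Bs i *m P2) ^t* *m (P1 *m Bs i *m P2)) 0 j <= d%:R.
Proof.
move=> H1 I1 H2 I2 hB.
set X := P1 *m Bs i *m P2.
have -> : spectral_diag (X ^t* *m X) 0 j = diag_mx (spectral_diag (X ^t* *m X)) j j.
  by rewrite mxE eqxx mulr1n.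
rewrite spectral_gram -nrm_col colE -mulmxA -colE.
set U := spectralmx _; set u := col j _.
have nu : nrm u = 1.
  have UU : U *m U ^t* = 1%:M by apply/unitarymxP; apply: spectral_unitarymx.
  by rewrite /u nrm_col trmxCK UU mxE eqxx.
rewrite /X -!mulmxA.
apply: le_trans (nrm_proj _ H1 I1) _.
apply: (@le_trans _ _ (\sum_k nrm (Bs k *m (P2 *m u)))).
  rewrite (bigD1 i) //= lerDl sumr_ge0 // => k _; exact: nrm_ge0.
rewrite nrm_sum // -{2}[d%:R]mulr1 -nu ler_wpM2l ?ler0n //.
  by rewrite nu ler0n.
by apply: nrm_proj.
Qed.

End Mat.

Lemma count_nz_le_rank (F : fieldType) n (D : 'rV[F]_n) :
  (#|[set j | D 0%R j != 0%R]| <= \rank (diag_mx D))%N.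
Proof.
set J := [set j | D 0%R j != 0%R].
pose f := fun a : 'I_#|J| => enum_val a.
have finj : injective f by apply: enum_val_inj.
set M := rowsub f (colsub f (diag_mx D)).
have ME : M = diag_mx (\row_a D 0%R (f a)).
  apply/matrixP => a b; rewrite !mxE (inj_eq finj).
  by case: eqP => [->|]; rewrite ?mulr1n ?mulr0n.
have Mu : M \in unitmx.
  rewrite unitmxE ME det_diag unitfE; apply/prodf_neq0 => a _.
  by rewrite mxE; have := enum_valP a; rewrite inE.
rewrite -(mxrank_unit Mu).
apply: (leq_trans (mxrankS (rowsub_sub _ _))).
have -> : colsub f (diag_mx D) = diag_mx D *m colsub f 1%:M.
  by rewrite mulmx_colsub mulmx1.
exact: mxrankM_maxl.
Qed.


Section Real.
Variable R : realType.
Local Notation C := R[i].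

Lemma ReD (x y : C) : complex.Re (x + y) = complex.Re x + complex.Re y.
Proof. by case: x => ? ?; case: y => ? ?. Qed.

Lemma Re_natr k : complex.Re (k%:R : C) = k%:R.
Proof. by elim: k => [//|k IH]; rewrite !mulrS ReD IH. Qed.

Lemma sd_ge0 n (X : 'M[C]_n) j : 0 <= spectral_diag (X ^t* *m X) 0 j.
Proof.
have -> : spectral_diag (X ^t* *m X) 0 j = diag_mx (spectral_diag (X ^t* *m X)) j j.
  by rewrite mxE eqxx mulr1n.
by rewrite spectral_gram -nrm_col; apply: nrm_ge0.
Qed.

Lemma sv_ge0 n (X : 'M[C]_n) j : 0 <= sing_vals X 0 j.
Proof. by rewrite mxE sqrtr_ge0. Qed.

Lemma sv_sqr n (X : 'M[C]_n) j : sing_vals X 0 j ^+ 2 = complex.Re (spectral_diag (X ^t* *m X) 0 j).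
Proof.
rewrite mxE sqr_sqrtr //.
by have := sd_ge0 X j; rewrite lecE => /andP[_].
Qed.

Lemma sv_neq0 n (X : 'M[C]_n) j : sing_vals X 0 j != 0 -> spectral_diag (X ^t* *m X) 0 j != 0.
Proof. by apply: contra => /eqP E; rewrite mxE /adj E /= sqrtr0. Qed.

Lemma projV_herm n (V : 'M[C]_n) : (projV V) ^t* = projV V.
Proof.
rewrite /projV; have := proj_ortho_herm V => h.
rewrite trmxK; rewrite -{2}h map_trmx trmxK //.
Qed.

Lemma projV_idem n (V : 'M[C]_n) : projV V *m projV V = projV V.
Proof. by rewrite /projV -trmx_mul proj_ortho_idem. Qed.

Lemma projV_rank n (V : 'M[C]_n) : \rank (projV V) = \rank V.
Proof. rewrite /projV mxrank_tr. exact (proj_orthoE V).1. Qed.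

Lemma coprojV_herm n (V : 'M[C]_n) : (1%:M - projV V) ^t* = 1%:M - projV V.
Proof. by rewrite trmxCB trmxC1 projV_herm. Qed.

Lemma coprojV_idem n (V : 'M[C]_n) : (1%:M - projV V) *m (1%:M - projV V) = 1%:M - projV V.
Proof. by rewrite mulmxBl mul1mx mulmxBr mulmx1 projV_idem subrr subr0. Qed.

Lemma sv_le n d (B : 'I_d -> 'M[C]_n) (V : 'M[C]_n) i j :
  bistochastic B -> sing_vals (restr V (B i)) 0 j ^+ 2 <= d%:R.
Proof.
case=> hB _; rewrite sv_sqr.
have := sv_bound i j (projV_herm V) (projV_idem V) (coprojV_herm V) (coprojV_idem V) hB.
by rewrite /restr lecE Re_natr => /andP[_].
Qed.

Lemma sv_count n (B : 'M[C]_n) (V : 'M[C]_n) :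
  (#|[set j | sing_vals (restr V B) 0%R j != 0%R]| <= \rank V)%N.
Proof.
set X := restr V B.
apply: (leq_trans (n := #|[set j | spectral_diag (X ^t* *m X) 0%R j != 0%R]|)).
  by apply: subset_leq_card; apply/fintype.subsetP => j; rewrite !inE; apply: sv_neq0.
apply: (leq_trans (count_nz_le_rank _)).
rewrite spectral_gram -projV_rank.
apply: (leq_trans (mxrankM_maxr _ _)).
by rewrite /X /restr -!mulmxA; apply: mxrankM_maxl.
Qed.

Lemma schatten_pow (p : R) n (X : 'M[C]_n) : 0 < p ->
  schatten p X `^ p = \sum_j sing_vals X 0 j `^ p.
Proof.
move=> p0; rewrite /schatten -powRrM mulVf ?gt_eqF // powRr1 //.
by apply: sumr_ge0 => j _; apply: powR_ge0.
Qed.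

End Real.


Section RealIneq.
Variable R : realType.

Lemma tangent1 (t r : R) : 0 < t -> 0 < r <= 1 -> t `^ r <= r * t + (1 - r).
Proof.
move=> t0 /andP[r0 r1].
have [->|rlt1] := eqVneq r 1.
  by rewrite mul1r subrr addr0 powRr1 // ltW.
have r1' : r < 1 by rewrite lt_neqAle rlt1.
have i1 : 0 < r^-1 by rewrite invr_gt0.
have i2 : 0 < (1 - r)^-1 by rewrite invr_gt0 subr_gt0.
have i3 : r^-1^-1 + (1 - r)^-1^-1 = 1 by rewrite !invrK addrC subrK.
have h := @conjugate_powR R (t `^ r) 1 r^-1 (1 - r)^-1 (powR_ge0 _ _) ler01 i1 i2 i3.
rewrite mulr1 -powRrM mulfV ?gt_eqF // in h.
have e1 : (1 : R) `^ (1 - r)^-1 = 1 by rewrite powR1.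
by rewrite (powRr1 (ltW t0)) e1 !invrK mul1r mulrC in h.
Qed.

Lemma tangent (a m r : R) : 0 <= a -> 0 < m -> 0 < r <= 1 ->
  a `^ r <= m `^ r * (r * (a / m) + (1 - r) * (a != 0)%:R).
Proof.
move=> a0 m0 hr; have [->|an0] := eqVneq a 0.
  rewrite /= mul0r !mulr0 addr0 mulr0 powR0 //; by case/andP: hr => r0 _; rewrite gt_eqF.
rewrite /= mulr1.
have t0 : 0 < a / m by rewrite divr_gt0 // lt_neqAle eq_sym an0.
have := tangent1 t0 hr.
by rewrite -(ler_pM2l (powR_gt0 r m0)) -powRM ?(ltW m0) ?(ltW t0) // mulrC divfK ?gt_eqF.
Qed.

End RealIneq.


Local Open Scope classical_set_scope.
Section Main.
Variable R : realType.
Local Notation C := R[i].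

Definition val (p : R) n d (B : 'I_d -> 'M[C]_n) (V : 'M[C]_n) :=
  (\sum_i (schatten p (restr V (B i))) `^ p) / (d%:R * (\rank V)%:R).

Lemma val_ge0 p n d (B : 'I_d -> 'M[C]_n) V : 0 <= val p B V.
Proof.
by rewrite /val divr_ge0 ?mulr_ge0 ?ler0n // sumr_ge0 // => i _; apply: powR_ge0.
Qed.

Lemma hSp_le p n d (B : 'I_d -> 'M[C]_n) V :
  (0 < \rank V)%N -> (2 * \rank V <= n)%N -> hSp p B <= val p B V.
Proof.
move=> h1 h2; rewrite /hSp; apply: ge_inf; last by exists V.
by exists 0 => x [V' [_ _ ->]]; apply: val_ge0.
Qed.

Lemma hSp_ge p n d (B : 'I_d -> 'M[C]_n) c : (2 <= n)%N ->
  (forall V : 'M[C]_n, (0 < \rank V)%N -> (2 * \rank V <= n)%N -> c <= val p B V) ->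
  c <= hSp p B.
Proof.
move=> n2 H; rewrite /hSp; apply: lb_le_inf.
  have n0 : (0 < n)%N by apply: leq_trans n2.
  exists (val p B (delta_mx (Ordinal n0) (Ordinal n0))).
  have r1 : \rank (delta_mx (Ordinal n0) (Ordinal n0) : 'M[C]_n) = 1%N.
    exact: mxrank_delta.
  by rewrite /=; exists (delta_mx (Ordinal n0) (Ordinal n0)); split; [rewrite r1 | rewrite r1 | ].

by move=> x [V [h1 h2 ->]]; apply: H.
Qed.

Lemma hSp_ge0 p n d (B : 'I_d -> 'M[C]_n) : (2 <= n)%N -> 0 <= hSp p B.
Proof. by move=> n2; apply: hSp_ge => // V _ _; apply: val_ge0. Qed.


Lemma pow_le (s D p q : R) : 0 <= s -> s ^+ 2 <= D -> 0 < q -> q <= p ->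
  s `^ p <= D `^ ((p - q) / 2) * s `^ q.
Proof.
move=> s0 sD q0 qp.
have p0 : 0 < p by apply: lt_le_trans qp.
have [->|sn0] := eqVneq s 0.
  by rewrite powR0 ?gt_eqF // mulr_ge0 ?powR_ge0.
rewrite -{1}(subrK q p) powRD; last by rewrite sn0 implybT.
rewrite ler_wpM2r ?powR_ge0 //.
have e : p - q = 2 * ((p - q) / 2) by rewrite mulrC divfK // pnatr_eq0.
rewrite {1}e powRrM powR_mulrn //.
apply: ge0_ler_powR => //.
- by rewrite divr_ge0 ?subr_ge0.
- by rewrite nnegrE sqr_ge0.
- by rewrite nnegrE (le_trans _ sD) ?sqr_ge0.
Qed.

Lemma val_le1 p q n d (B : 'I_d -> 'M[C]_n) V : bistochastic B -> 0 < q -> q <= p ->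
  val p B V <= d%:R `^ ((p - q) / 2) * val q B V.
Proof.
move=> hB q0 qp; have p0 : 0 < p by apply: lt_le_trans qp.
rewrite /val mulrA ler_wpM2r ?invr_ge0 ?mulr_ge0 ?ler0n //.
rewrite mulr_sumr; apply: ler_sum => i _.
rewrite !schatten_pow // mulr_sumr; apply: ler_sum => j _.
by apply: pow_le => //; [exact: sv_ge0 | exact: sv_le].
Qed.


Lemma nz_count (p : R) n (Bi : 'M[C]_n) (V : 'M[C]_n) : 0 < p ->
  \sum_(j < n) ((sing_vals (restr V Bi) 0 j `^ p != 0 :> R)%:R : R) <= (\rank V)%:R.
Proof.
move=> p0; rewrite -natr_sum ler_nat.
apply: leq_trans (sv_count Bi V).
rewrite -sum1_card [X in (_ <= X)%N]big_mkcond /=; apply: leq_sum => j _.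
by rewrite inE powR_eq0 (gt_eqF p0) andbT; case: (_ == 0).
Qed.

Lemma val_le2 p q n d (B : 'I_d -> 'M[C]_n) (V : 'M[C]_n) :
  (0 < \rank V)%N -> (0 < d)%N -> 0 < q -> q <= p ->
  val q B V <= (val p B V) `^ (q / p).
Proof.
move=> k0 d0 q0 qp; have p0 : 0 < p by apply: lt_le_trans qp.
set r := q / p.
have r0 : 0 < r <= 1 by rewrite divr_gt0 //= ler_pdivrMr // mul1r.
have rn0 : r != 0 by case/andP: r0 => r0 _; rewrite gt_eqF.
set N := (d%:R * (\rank V)%:R : R).
have N0 : 0 < N by rewrite mulr_gt0 // ltr0n.
pose a i j := sing_vals (restr V (B i)) 0 j `^ p.
have Eq : forall i j, sing_vals (restr V (B i)) 0 j `^ q = a i j `^ r.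
  by move=> i j; rewrite /a -powRrM /r mulrCA divff ?gt_eqF // mulr1.
have a0 : forall i j, 0 <= a i j by move=> i j; apply: powR_ge0.
have Vp : val p B V = (\sum_i \sum_j a i j) / N.
  unfold val; congr (_ / _); apply: eq_bigr => i _.
  by rewrite schatten_pow.
have Vq : val q B V = (\sum_i \sum_j a i j `^ r) / N.
  unfold val; congr (_ / _); apply: eq_bigr => i _.
  rewrite schatten_pow //.
  by apply: eq_bigr => j _; rewrite Eq.
rewrite Vp Vq.
set T := \sum_i \sum_j a i j.
have T0 : 0 <= T by apply: sumr_ge0 => i _; apply: sumr_ge0.
have [Te|Tn0] := eqVneq T 0.
  have ai0 : forall i j, a i j = 0.
    move=> i j; have := psumr_eq0P (fun i _ => sumr_ge0 _ (fun j _ => a0 i j)) Te.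
    by move=> /(_ i isT) /psumr_eq0P -> //.
  rewrite big1 ?mul0r ?powR_ge0 // => i _; rewrite big1 // => j _.
  by rewrite ai0 powR0.
set m := T / N.
have m0 : 0 < m by rewrite divr_gt0 // lt_neqAle eq_sym Tn0.
pose e i j := ((a i j != 0)%:R : R).
have E0 : \sum_i \sum_j e i j <= N.
  apply: (@le_trans _ _ (\sum_(i < d) (\rank V)%:R)).
    by apply: ler_sum => i _; apply: nz_count.
  by rewrite sumr_const card_ord /N mulr_natl.
rewrite ler_pdivrMr //.
apply: (@le_trans _ _ (\sum_i \sum_j (m `^ r * r / m * a i j + m `^ r * (1 - r) * e i j))).
  apply: ler_sum => i _; apply: ler_sum => j _.
  have := tangent (a0 i j) m0 r0.
  by rewrite mulrDr !mulrA (mulrAC _ (a i j)).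
have -> : \sum_i \sum_j (m `^ r * r / m * a i j + m `^ r * (1 - r) * e i j)
   = m `^ r * r / m * T + m `^ r * (1 - r) * \sum_i \sum_j e i j.
  rewrite /T !mulr_sumr -big_split /=; apply: eq_bigr => i _.
  by rewrite !mulr_sumr -big_split.
apply: (@le_trans _ _ (m `^ r * r / m * T + m `^ r * (1 - r) * N)).
  rewrite lerD2l ler_wpM2l // mulr_ge0 ?powR_ge0 // subr_ge0.
  by case/andP: r0.
have -> : m `^ r * r / m * T = m `^ r * r * N.
  by rewrite -mulrA /m invf_div divfK.
by rewrite -mulrA -mulrA -mulrDr -mulrDl addrC subrK mul1r mulrC.
Qed.

Lemma part1 n d (B : 'I_d -> 'M[C]_n) (p q : R) :
  (2 <= n)%N -> (1 <= d)%N -> bistochastic B -> 1 <= q -> q <= p ->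
  hSp p B <= (d%:R) `^ ((p - q) / 2) * hSp q B /\ (hSp q B) `^ (p / q) <= hSp p B.
Proof.
move=> n2 d1 hB q1 qp.
have q0 : 0 < q by apply: lt_le_trans q1.
have p0 : 0 < p by apply: lt_le_trans qp.
have c0 : 0 < (d%:R : R) `^ ((p - q) / 2) by apply: powR_gt0; rewrite ltr0n.
split.
  rewrite -ler_pdivrMl //; apply: hSp_ge => // V h1 h2.
  rewrite ler_pdivrMl //; apply: le_trans (hSp_le p B h1 h2) _.
  exact: val_le1.
apply: hSp_ge => // V h1 h2.
have hq := le_trans (hSp_le q B h1 h2) (val_le2 B h1 d1 q0 qp).
have := ge0_ler_powR (r := p / q) _ _ _ hq.
rewrite -powRrM mulrA divfK ?gt_eqF // divff ?gt_eqF // powRr1 ?val_ge0 //.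
apply; rewrite ?divr_ge0 ?ltW // nnegrE ?powR_ge0 //.
exact: hSp_ge0.
Qed.

Lemma part3 (p q : R) (d : nat) (nm : nat -> nat) (B : forall m : nat, 'I_d -> 'M[C]_(nm m)) :
  1 <= q -> q <= p -> (1 <= d)%N ->
  (forall m, (2 <= nm m)%N) -> (forall m, bistochastic (B m)) ->
  (0 < inf [set hSp p (B m) | m in [set: nat]] <->
   0 < inf [set hSp q (B m) | m in [set: nat]]).
Proof.
move=> q1 qp d1 n2 hB.
have q0 : 0 < q by apply: lt_le_trans q1.
have p0 : 0 < p by apply: lt_le_trans qp.
have c0 : 0 < (d%:R : R) `^ ((p - q) / 2) by apply: powR_gt0; rewrite ltr0n.
have P1 := fun m => part1 (n2 m) d1 (hB m) q1 qp.
have lbS : forall x : R, has_lbound [set hSp x (B m) | m in [set: nat]].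
  by move=> x; exists 0 => y [m _ <-]; apply: hSp_ge0.
have infS : forall x m, inf [set hSp x (B m) | m in [set: nat]] <= hSp x (B m).
  by move=> x m; apply: ge_inf (lbS x) _ _; exists m.
have neS : forall x : R, [set hSp x (B m) | m in [set: nat]] !=set0.
  by move=> x; exists (hSp x (B 0%N)); exists 0%N.
split => h.
  apply: (lt_le_trans (divr_gt0 h c0)); apply: lb_le_inf => // y [m _ <-].
  rewrite ler_pdivrMr // mulrC; apply: le_trans (infS p m) _.
  exact: (P1 m).1.
apply: (lt_le_trans (powR_gt0 (p / q) h)); apply: lb_le_inf => // y [m _ <-].
apply: le_trans (P1 m).2.
apply: ge0_ler_powR.
- by rewrite divr_ge0 // ltW.
- by rewrite nnegrE ltW.
- by rewrite nnegrE hSp_ge0.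
- exact: infS.
Qed.

End Main.

End Helpers.
Import Helpers.

Theorem theorem1 :
  (forall (R : realType) (n d : nat) (B : 'I_d -> 'M[R[i]]_n) (p q : R),
      (2 <= n)%N -> (1 <= d)%N -> bistochastic B ->
      1 <= q -> q <= p ->
      hSp p B <= (d%:R) `^ ((p - q) / 2) * hSp q B /\
      (hSp q B) `^ (p / q) <= hSp p B) /\
  (forall (R : realType) (p q : R) (d : nat) (nm : nat -> nat)
          (B : forall m : nat, 'I_d -> 'M[R[i]]_(nm m)),
      1 <= p -> 1 <= q -> (1 <= d)%N ->
      (forall m, (2 <= nm m)%N) -> (forall m, bistochastic (B m)) ->
      (0 < inf [set hSp p (B m) | m in [set: nat]] <->
       0 < inf [set hSp q (B m) | m in [set: nat]])).
Proof.
split.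
  by move=> R n d B p q n2 d1 hB q1 qp; apply: part1.
move=> R p q d nm B p1 q1 d1 n2 hB.
case: (lerP q p) => [qp|pq]; first exact: part3.
by apply: iff_sym; apply: part3 => //; apply: ltW.
Qed.
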